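(* Let $(\tau_i)_{i\in\mathbb{N}}$ be i.i.d. nonnegative strictly $\beta$-stable random variables, $\beta\in(0,1)$. Let $T(0)=0$, $T(n)=\tau_1+\dots+\tau_n$ and $N_t=\max\{n\ge0: T(n)\le t\}$. Then there is a constant $M$ such that for each $t\ge0$, $$E\left[\frac{N_{nt}}{n^\beta}\right]\le t^\beta M\quad\text{for all } n\ge1.$$ *)

(* Defs.v *)
From HB Require Import structures.
From mathcomp Require Import all_boot all_order all_algebra.
From mathcomp Require Import finmap.
From mathcomp Require Import all_classical all_reals all_analysis.
Set Implicit Arguments. Unset Strict Implicit. Unset Printing Implicit Defensive.
Import Order.TTheory GRing.Theory Num.Theory.
Local Open Scope classical_set_scope.
Local Open Scope ring_scope.

Definition partial_sum (T : Type) (R : realType) (X : nat -> T -> R)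
  (n : nat) (w : T) : R := \sum_(i < n) X i w.

Section defs.
Context (d : measure_display) (T : measurableType d) (R : realType)
  (P : probability T R).

Definition mutually_independent (X : nat -> T -> R) : Prop :=
  forall (I : {fset nat}) (B : nat -> set R),
    (forall i, i \in I -> measurable (B i)) ->
    P (\bigcap_(i in [set` I]) (X i @^-1` B i)) =
    (\prod_(i <- I) P (X i @^-1` B i))%E.

Definition identically_distributed (X : nat -> T -> R) : Prop :=
  forall i (B : set R), measurable B ->
    P (X i @^-1` B) = P (X 0%N @^-1` B).

(* strict beta-stability of the (common) law of an i.i.d. sequence:
   T(n) has the same law as n^(1/beta) X_0 for every n >= 1 *)
Definition strictly_stable (beta : R) (X : nat -> T -> R) : Prop :=
  forall n : nat, (0 < n)%N -> forall B : set R, measurable B ->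
    P (partial_sum X n @^-1` B) =
    P ((fun w => (n%:R `^ beta^-1) * X 0%N w) @^-1` B).

End defs.

(* N_t(w) = max {n >= 0 : T(n)(w) <= t}, as an extended real
   (the supremum, which is +oo if the set is unbounded) *)
Definition renewal_count (T : Type) (R : realType) (X : nat -> T -> R)
  (t : R) (w : T) : \bar R :=
  ereal_sup [set (n%:R)%:E | n in [set n : nat | partial_sum X n w <= t]].

(* Main.v *)
Require Import Defs.
From HB Require Import structures.
From mathcomp Require Import all_boot all_order all_algebra.
From mathcomp Require Import finmap.
From mathcomp Require Import all_classical all_reals all_analysis.
From mathcomp Require Import ring lra.
Import Order.TTheory GRing.Theory Num.Theory.
Local Open Scope classical_set_scope.
Local Open Scope ring_scope.

Section real.
Variable R : realType.

Lemma geom_tel (r : R) K :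
  (\sum_(k < K) r ^+ k.+1) * (1 - r) = r - r ^+ K.+1.
Proof.
elim: K => [|K IH]; first by rewrite big_ord0 mul0r expr1 subrr.
rewrite big_ord_recr /= mulrDl IH !exprS; ring.
Qed.

Lemma geom_bound (lam a : R) K : 0 < lam -> 0 < a ->
  \sum_(k < K) expR (- (lam * a)) ^+ k.+1 <= (lam * a)^-1.
Proof.
move=> l0 a0; set r := expR (- (lam * a)).
have la0 : 0 < lam * a by rewrite mulr_gt0.
have r0 : 0 < r by exact: expR_gt0.
have e1 : 1 + lam * a <= expR (lam * a) by exact: expR_ge1Dx.
have re : r * expR (lam * a) = 1 by rewrite /r -expRD addNr expR0.
have r1 : r * (1 + lam * a) <= 1 by rewrite -[X in _ <= X]re ler_wpM2l // ltW.
have rlt1 : r < 1.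
  have : r < r * (1 + lam * a) by rewrite ltr_pMr // ltrDl.
  move=> h; exact: lt_le_trans h r1.
have pos : 0 < 1 - r by rewrite subr_gt0.
set S := \sum_(k < K) _.
have hS : S * (1 - r) <= r.
  rewrite /S geom_tel lerBlDr lerDl; apply: exprn_ge0; exact: ltW.
rewrite -(ler_pM2r pos) (le_trans hS) //.
rewrite ler_pdivlMl //; nra.
Qed.

Lemma qpowE (q : R) m : 0 < q -> q ^+ m = expR (- (- ln q * m%:R)).
Proof. by move=> q0; rewrite mulNr opprK mulrC expRM_natl lnK. Qed.

Lemma zero_case (q x : R) : 0 < q < 1 -> (forall m, x <= q ^+ m) -> x <= 0.
Proof.
move=> /andP [q0 q1] h; rewrite leNgt; apply/negP => x0.
set lam := - ln q.
have l0 : 0 < lam by rewrite oppr_gt0 ln_lt0 // q0 q1.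
set m := (Num.truncn ((lam * x)^-1)).+1.
have hm : (lam * x)^-1 < m%:R by exact: truncnS_gt.
have lx : 0 < lam * x by rewrite mulr_gt0.
have h1 : 1 < lam * x * m%:R.
  by rewrite -(ltr_pM2l lx) mulfV ?gt_eqF // in hm.
have := h m; rewrite qpowE // expRN.
have e1 := expR_ge1Dx (lam * m%:R).
have ep : 0 < 1 + lam * m%:R by rewrite ltr_wpDr // mulr_ge0 // ltW.
move=> hx.
have : x <= (1 + lam * m%:R)^-1.
  apply: le_trans hx _; rewrite lef_pV2 ?posrE ?expR_gt0 //.
move=> h2.
have h3 : x * (1 + lam * m%:R) <= 1 by rewrite -ler_pdivlMr // div1r.
nra.
Qed.

Lemma sum_bound (beta x0 q s : R) (a_ : nat -> R) K :
  0 < beta -> 0 < x0 -> 0 < q < 1 -> 0 < s ->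
  (forall k m, m%:R * s `^ beta <= k.+1%:R * x0 `^ beta -> a_ k <= q ^+ m) ->
  \sum_(k < K) a_ k <= expR (- ln q) / (- ln q * x0 `^ beta) * s `^ beta.
Proof.
move=> b0 x00 /andP [q0 q1] s0 h.
set lam := - ln q.
have l0 : 0 < lam by rewrite oppr_gt0 ln_lt0 // q0 q1.
have xb : 0 < x0 `^ beta by exact: powR_gt0.
have sb : 0 < s `^ beta by exact: powR_gt0.
set a := x0 `^ beta / s `^ beta.
have a0 : 0 < a by rewrite divr_gt0.
have hk k : a_ k <= expR lam * expR (- (lam * a)) ^+ k.+1.
  set m := Num.truncn (k.+1%:R * a).
  have ka0 : 0 <= k.+1%:R * a by rewrite mulr_ge0 // ltW.
  have hm1 : m%:R <= k.+1%:R * a by rewrite truncn_le.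
  have hm2 : k.+1%:R * a < m.+1%:R by exact: truncnS_gt.
  have := h k m.
  have c : m%:R * s `^ beta <= k.+1%:R * x0 `^ beta.
    by rewrite -ler_pdivlMr // -mulrA.
  move=> /(_ c) /le_trans; apply.
  rewrite qpowE // -expRM_natl -expRD ler_expR.
  rewrite -/lam; rewrite -natr1 in hm2.
  set M := m%:R in hm2 *; set k1 := k.+1%:R in hm2 *.
  nra.
have hs : \sum_(k < K) a_ k <= \sum_(k < K) (expR lam * expR (- (lam * a)) ^+ k.+1).
  by apply: ler_sum => k _; exact: hk.
apply: le_trans hs _.
rewrite -mulr_sumr.
apply: le_trans (ler_wpM2l (ltW (expR_gt0 _)) (@geom_bound lam a K l0 a0)) _.
rewrite /a le_eqVlt; apply/orP; left; apply/eqP.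
have ? : lam != 0 by rewrite gt_eqF.
have ? : x0 `^ beta != 0 by rewrite gt_eqF.
have ? : s `^ beta != 0 by rewrite gt_eqF.
field.
by rewrite (gt_eqF xb) (gt_eqF sb) (gt_eqF l0).
Qed.
End real.

Section aux.
Context (d : measure_display) (T : measurableType d) (R : realType).
Variable P : probability T R.

Lemma Pfin (A : set T) : measurable A -> (fine (P A))%:E = P A.
Proof. by move=> mA; rewrite fineK// fin_num_measure. Qed.

Lemma Pfine_ge0 (A : set T) : 0 <= fine (P A).
Proof. by apply: fine_ge0; exact: measure_ge0. Qed.

Lemma Pfine_le1 (A : set T) : measurable A -> fine (P A) <= 1.
Proof. by move=> mA; rewrite -lee_fin Pfin// probability_le1. Qed.

Lemma Pfine_le (A B : set T) : measurable A -> measurable B -> A `<=` B ->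
  fine (P A) <= fine (P B).
Proof.
by move=> mA mB AB; rewrite -lee_fin !Pfin//; apply: le_measure => //; rewrite inE.
Qed.

(* integral monotonicity without measurability *)
Lemma int_mono (f g : T -> \bar R) : (forall x, (0 <= f x)%E) ->
  (forall x, (f x <= g x)%E) -> (\int[P]_x f x <= \int[P]_x g x)%E.
Proof.
move=> f0 fg.
have g0 x : (0 <= g x)%E by apply: le_trans (fg x).
rewrite /integral !patch_setT.
have f0' x : setT x -> (0 <= f x)%E by move=> _; exact: f0.
have g0' x : setT x -> (0 <= g x)%E by move=> _; exact: g0.
have Ef : (([eta f]) ^\+)%E = f by apply/funext => x; exact: (ge0_funeposE f0' (in_setT x)).
have Eg : (([eta g]) ^\+)%E = g by apply/funext => x; exact: (ge0_funeposE g0' (in_setT x)).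
have Ef' : (([eta f]) ^\-)%E = cst 0%E by apply/funext => x; exact: (ge0_funenegE f0' (in_setT x)).
have Eg' : (([eta g]) ^\-)%E = cst 0%E by apply/funext => x; exact: (ge0_funenegE g0' (in_setT x)).
rewrite Ef Eg Ef' Eg'.
apply: leeB => //.
apply: le_ereal_sup => _ [h hf <-]; exists h => //= x.
exact: le_trans (hf x) (fg x).
Qed.

End aux.

Lemma prod_const_seq (R : comPzRingType) (I : Type) (s : seq I) (c : R) :
  \prod_(i <- s) c = c ^+ size s.
Proof. by elim: s => [|x s IH]; rewrite ?big_nil ?expr0 // big_cons IH exprS. Qed.

Section main.
Context (d : measure_display) (T : measurableType d) (R : realType).
Variables (P : probability T R) (tau : nat -> T -> R) (beta : R).
Hypothesis mtau : forall i, measurable_fun setT (tau i).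
Hypothesis ind : mutually_independent P tau.
Hypothesis idd : identically_distributed P tau.
Hypothesis neg0 : forall i, P [set w | tau i w < 0] = 0%E.

Definition Itv (z : R) : set R := [set x | x <= z].

Lemma mItv z : measurable (Itv z).
Proof.
have -> : Itv z = [set` `]-oo, z]%R] by apply/seteqP; split => x /=; rewrite in_itv.
exact: measurable_itv.
Qed.

Lemma mpre (f : T -> R) z : measurable_fun setT f -> measurable (f @^-1` Itv z).
Proof. by move=> mf; rewrite -[_ @^-1` _]setTI; apply: mf => //; exact: mItv. Qed.

Lemma mps m : measurable_fun setT (partial_sum tau m).
Proof. by apply: measurable_sum => i; exact: mtau. Qed.

Definition Bad := \bigcup_k [set w | tau k w < 0].

Lemma mneg k : measurable [set w | tau k w < 0].
Proof.
have -> : [set w | tau k w < 0] = tau k @^-1` [set` `]-oo, 0[%R].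
  by apply/seteqP; split => w /=; rewrite in_itv.
by rewrite -[_ @^-1` _]setTI; apply: mtau => //; exact: measurable_itv.
Qed.

Lemma mBad : measurable Bad.
Proof. by apply: bigcupT_measurable => k; exact: mneg. Qed.

Lemma PBad : P Bad = 0%E.
Proof.
apply/eqP; rewrite -measure_le0.
have := @measure_sigma_subadditive _ _ _ P Bad (fun k => [set w | tau k w < 0]) mneg mBad.
move=> /(_ (fun w hw => hw)) h; apply: le_trans h _.
by rewrite eseries0 // => k _ _; exact: neg0.
Qed.

Lemma tau_le_ps w m i : ~ Bad w -> (i < m)%N -> tau i w <= partial_sum tau m w.
Proof.
move=> nB im; rewrite /partial_sum (bigD1 (Ordinal im)) //=.
rewrite lerDl sumr_ge0 // => j _; rewrite leNgt; apply/negP => h.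
by apply: nB; exists j.
Qed.

Lemma ps_mono w k n : ~ Bad w -> (k <= n)%N ->
  partial_sum tau k w <= partial_sum tau n w.
Proof.
move=> nB; elim: n => [|n IH]; first by rewrite leqn0 => /eqP ->.
rewrite leq_eqVlt => /predU1P [-> //|]; rewrite ltnS => /IH h.
apply: le_trans h _; rewrite /partial_sum big_ord_recr /= lerDl.
by rewrite leNgt; apply/negP => h'; apply: nB; exists n.
Qed.

Definition F z := fine (P (tau 0%N @^-1` Itv z)).
Definition S m z := fine (P (partial_sum tau m @^-1` Itv z)).

Lemma indep m z : S m z <= F z ^+ m.
Proof.
pose I := [fset i in iota 0 m]%fset.
pose Cap := \bigcap_(i in [set` I]) (tau i @^-1` Itv z).
have mCap : measurable Cap.
  apply: fin_bigcap_measurable; first exact: finite_fset.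
  by move=> i _; apply: mpre.
have sub : partial_sum tau m @^-1` Itv z `<=` Cap `|` Bad.
  move=> w /= hw.
  have [Bw|nB] := pselect (Bad w); first by right.
  left => i /=; rewrite /I in_fset /= mem_iota add0n => /andP [_ im].
  have hw' : partial_sum tau m w <= z by exact: hw.
  exact: le_trans (@tau_le_ps w m i nB im) hw'.
rewrite /S -lee_fin Pfin; last exact/mpre/mps.
have mA : partial_sum tau m @^-1` Itv z \in measurable by rewrite inE; exact/mpre/mps.
have mB : Cap `|` Bad \in measurable by rewrite inE; apply: measurableU => //; exact: mBad.
have := @le_measure _ _ _ P _ _ mA mB sub => h; apply: le_trans h _.
have h2 : (P (Cap `|` Bad) <= P Cap)%E.
  by rewrite (measureU0 (mu:=P) mCap mBad PBad).
apply: (le_trans h2).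
rewrite /Cap ind; last by move=> i _; exact: mItv.
have -> : (\prod_(i <- I) P (tau i @^-1` Itv z))%E = (\prod_(i <- I) (F z)%:E)%E.
  by apply: eq_bigr => i _; rewrite idd ?Pfin//; [exact: mpre | exact: mItv].
rewrite prodEFin prod_const_seq lee_fin.
suff -> : size I = m by [].
have := card_fseq (iota 0 m); rewrite undup_id ?iota_uniq // size_iota.
by [].
Qed.

Lemma sum_ge_n (u : nat -> \bar R) n : (forall i, (i < n)%N -> (1 <= u i)%E) ->
  ((n%:R)%:E <= \sum_(0 <= i < n) u i)%E.
Proof.
elim: n => [|n IH] h; first by rewrite big_nil.
rewrite big_nat_recr //= -natr1 EFinD; apply: leeD.
  by apply: IH => i hi; apply: h; exact: ltnW.
exact: h.
Qed.

Section renewal.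
Variable s : R.

Definition Aset k := partial_sum tau k.+1 @^-1` Itv s.
Definition Bset k := [set w | tau k w < 0].
Definition uu k w : \bar R := ((\1_(Aset k) w)%:E + +oo * (\1_(Bset k) w)%:E)%E.
Definition gg w := (\sum_(k <oo) uu k w)%E.

Lemma uu_ge0 k w : (0 <= uu k w)%E.
Proof. by rewrite /uu adde_ge0 // ?mule_ge0 // lee_fin indicE. Qed.

Lemma N_le_g w : (renewal_count tau s w <= gg w)%E.
Proof.
rewrite /renewal_count; apply: ge_ereal_sup => _ [n /= hn <-].
have [[k _ hk]|nB] := pselect (Bad w).
  suff : (+oo <= gg w)%E by rewrite leye_eq => /eqP ->; rewrite leey.
  apply: le_trans (nneseries_lim_ge k.+1 (fun i _ _ => uu_ge0 i w)).
  have hB : \1_(Bset k) w = 1 :> R by rewrite indicE mem_set.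
  rewrite big_nat_recr //= /uu hB mule1 addey ?addey ?leey //.
  apply/eqP => h.
  have : (0 <= \sum_(0 <= i < k) uu i w)%E by apply: sume_ge0 => i _; exact: uu_ge0.
  by rewrite /uu h.
apply: le_trans (nneseries_lim_ge n (fun i _ _ => uu_ge0 i w)).
apply: sum_ge_n => i hi.
rewrite /uu indicE mem_set /=; last first.
  rewrite /Aset /Itv /=; apply: le_trans hn; exact: ps_mono.
by rewrite leeDl // mule_ge0 // lee_fin indicE.
Qed.

Lemma mA k : measurable (Aset k).
Proof. exact/mpre/mps. Qed.

Lemma int_g : (\int[P]_w gg w = \sum_(k <oo) P (Aset k))%E.
Proof.
rewrite /gg integral_nneseries //; last 2 first.
- move=> k; apply: emeasurable_funD.
    by apply/measurable_realfun.measurable_EFinP; exact/measurable_realfun.measurable_indic/mA.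
  by apply: measurable_funeM; apply/measurable_realfun.measurable_EFinP; exact/measurable_realfun.measurable_indic/mneg.
- by move=> k w _; exact: uu_ge0.
apply: eq_eseriesr => k _; rewrite /uu ge0_integralD //; last 2 first.
- by apply/measurable_realfun.measurable_EFinP; exact/measurable_realfun.measurable_indic/mA.
- by apply: measurable_funeM; apply/measurable_realfun.measurable_EFinP; exact/measurable_realfun.measurable_indic/mneg.
rewrite ge0_integralZl //; last first.
  by apply/measurable_realfun.measurable_EFinP; exact/measurable_realfun.measurable_indic/mneg.
rewrite !integral_indic //; try exact: mA; try exact: mneg.
rewrite !setIT.
set X := (X in (_ + _ * X)%E).
have -> : X = 0%E by exact: neg0.
by rewrite mule0 adde0.
Qed.

End renewal.

Lemma F_ge0 z : 0 <= F z.
Proof. exact: Pfine_ge0. Qed.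

Lemma F_le1 z : F z <= 1.
Proof. by apply: Pfine_le1; exact/mpre. Qed.

Lemma F_mono y y' : y <= y' -> F y <= F y'.
Proof.
move=> yy; apply: Pfine_le; try exact/mpre.
by move=> w /= h; exact: le_trans h yy.
Qed.

Hypothesis pos : (0 < P [set w | tau 0%N w != 0%R])%E.

Lemma ex_x0 : exists x0, 0 < x0 /\ F x0 < 1.
Proof.
apply/not_existsP => hn.
have h0 j : P (~` (tau 0%N @^-1` Itv j.+1%:R^-1)) = 0%E.
  have hF : F j.+1%:R^-1 = 1.
    apply/eqP; rewrite eq_le F_le1 /= leNgt; apply/negP => h.
    by apply: (hn j.+1%:R^-1); split => //; rewrite invr_gt0 ltr0n.
  rewrite probability_setC; last exact/mpre.
  by rewrite -Pfin; [rewrite -/(F _) hF subee | exact/mpre].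
have hU : P (\bigcup_j ~` (tau 0%N @^-1` Itv j.+1%:R^-1)) = 0%E.
  apply/eqP; rewrite -measure_le0.
  have mC j : measurable (~` (tau 0%N @^-1` Itv j.+1%:R^-1)).
    by apply: measurableC; exact/mpre.
  have mBC : measurable (\bigcup_j ~` (tau 0%N @^-1` Itv j.+1%:R^-1)).
    exact: bigcupT_measurable.
  have := @measure_sigma_subadditive _ _ _ P _ (fun j => ~` (tau 0%N @^-1` Itv j.+1%:R^-1)) mC mBC.
  move=> /(_ (fun w hw => hw)) h; apply: le_trans h _.
  by rewrite eseries0 // => k _ _; exact: h0.
have sub : [set w | tau 0%N w != 0%R] `<=`
    [set w | tau 0%N w < 0] `|` \bigcup_j ~` (tau 0%N @^-1` Itv j.+1%:R^-1).
  move=> w /= hw; have [lt0|ge0] := ltP (tau 0%N w) 0; first by left.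
  right; exists (Num.truncn (tau 0%N w)^-1) => //=.
  rewrite /Itv /=; apply/negP; rewrite -ltNge.
  have tp : 0 < tau 0%N w by rewrite lt_neqAle eq_sym hw ge0.
  rewrite invf_plt ?posrE ?ltr0n //.
  exact: truncnS_gt.
have mS : [set w | tau 0%N w != 0%R] \in measurable.
  rewrite inE.
  have -> : [set w | tau 0%N w != 0%R] = tau 0%N @^-1` [set x | x != 0].
    by [].
  rewrite -[_ @^-1` _]setTI; apply: mtau => //.
  have -> : [set x : R | x != 0] = ~` [set 0].
    by apply/seteqP; split => x /=; [move=> /eqP | move=> /eqP].
  by apply: measurableC; exact: measurable_set1.
have mU : [set w | tau 0%N w < 0] `|` \bigcup_j ~` (tau 0%N @^-1` Itv j.+1%:R^-1) \in measurable.
  rewrite inE; apply: measurableU; first exact: mneg.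
  by apply: bigcupT_measurable => j; apply: measurableC; exact/mpre.
have := @le_measure _ _ _ P _ _ mS mU sub => h.
have : (P [set w | tau 0%N w != 0%R] <= 0)%E.
  apply: le_trans h _.
  apply: le_trans (measureU2 _ _ _) _; first exact: mneg.
    by apply: bigcupT_measurable => j; apply: measurableC; exact/mpre.
  have Z : forall x y : \bar R, x = 0%E -> y = 0%E -> (x + y <= 0)%E.
    by move=> x y -> ->; rewrite adde0.
  by apply: Z; [exact: neg0 | exact: hU].
by rewrite leNgt pos.
Qed.

Hypothesis hb : 0 < beta.
Hypothesis stab : strictly_stable P beta tau.

Definition cm (m : nat) := m%:R `^ beta^-1.

Lemma cm_gt0 m : (0 < m)%N -> 0 < cm m.
Proof. by move=> m0; apply: powR_gt0; rewrite ltr0n. Qed.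

Lemma stab_eq m y : (0 < m)%N -> F y = S m (y * cm m).
Proof.
move=> m0; rewrite /S /F stab //; last exact: mItv.
congr (fine (P _)); apply/seteqP; split => w /=; rewrite /Itv /=.
  by rewrite [cm m * _]mulrC ler_pM2r //; exact: cm_gt0.
by rewrite [_ `^ _ * _]mulrC ler_pM2r //; exact: cm_gt0.
Qed.

Lemma key m y : (0 < m)%N -> F y <= F (y * cm m) ^+ m.
Proof. by move=> m0; rewrite (@stab_eq m y m0); exact: indep. Qed.

Lemma term k m s x0 : (0 < k)%N -> (0 < m)%N ->
  cm m * s <= cm k * x0 -> F (s / cm k) <= F x0 ^+ m.
Proof.
move=> k0 m0 h.
have ck := @cm_gt0 k k0; have cmm := @cm_gt0 m m0.
have h1 : s / cm k <= x0 / cm m.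
  rewrite ler_pdivrMr // mulrAC ler_pdivlMr //.
  by rewrite mulrC [x0 * _]mulrC.
apply: le_trans (@F_mono _ _ h1) _.
by have := @key m (x0 / cm m) m0; rewrite divfK //; exact: lt0r_neq0.
Qed.

Lemma EN_bound : exists C : R, 0 <= C /\ forall s, 0 <= s ->
  (\int[P]_w renewal_count tau s w <= (C * s `^ beta)%:E)%E.
Proof.
have [x0 [x00 Fx0]] := ex_x0.
have F0 := F_ge0 x0.
set q := (1 + F x0) / 2.
have q0 : 0 < q by rewrite /q; lra.
have q1 : q < 1 by rewrite /q; lra.
have Fq : F x0 <= q by rewrite /q; lra.
have l0 : 0 < - ln q by rewrite oppr_gt0 ln_lt0 // q0 q1.
set C := expR (- ln q) / (- ln q * x0 `^ beta).
have C0 : 0 <= C.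
  by rewrite /C divr_ge0 ?expR_ge0 // mulr_ge0 ?powR_ge0 // ltW.
exists C; split => // s s0.
have hyp k m : m%:R * s `^ beta <= k.+1%:R * x0 `^ beta ->
    F (s / cm k.+1) <= q ^+ m.
  case: m => [|m] h; first by rewrite expr0; exact: F_le1.
  have c : cm m.+1 * s <= cm k.+1 * x0.
    have ib : 0 <= beta^-1 by rewrite invr_ge0 ltW.
    have := @ge0_ler_powR R beta^-1 ib (m.+1%:R * s `^ beta) (k.+1%:R * x0 `^ beta).
    rewrite !nnegrE !mulr_ge0 ?powR_ge0 // => /(_ isT isT h).
    rewrite !powRM ?powR_ge0 // -!powRrM mulfV ?gt_eqF // !powRr1 //; exact: ltW.
  apply: le_trans (@term k.+1 m.+1 s x0 isT isT c) _.
  by apply: lerXn2r => //; rewrite nnegrE // ltW.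
apply: le_trans (@int_mono _ _ _ P _ (gg s) _ _) _.
- move=> w; apply: ereal_sup_ubound; exists 0%N => //=.
  by rewrite /partial_sum big_ord0.
- exact: N_le_g.
rewrite int_g.
have eqA k : P (Aset s k) = (F (s / cm k.+1))%:E.
  rewrite -Pfin; last exact: mA.
  congr EFin; rewrite (@stab_eq k.+1 (s / cm k.+1)) // divfK //.
  by rewrite gt_eqF //; exact: cm_gt0.
rewrite (eq_eseriesr (fun k _ => eqA k)).
apply: lime_le; first by apply: is_cvg_nneseries => n _ _; rewrite lee_fin F_ge0.
apply: nearW => K; rewrite sumEFin lee_fin big_mkord.
move: s0; rewrite le_eqVlt => /predU1P [s0|sp].
  subst s; rewrite powR0 ?gt_eqF // mulr0.
  apply: sumr_le0 => k _; apply: (@zero_case R q) => [|m]; first by rewrite q0 q1.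
  apply: (hyp k m); rewrite powR0 ?gt_eqF // mulr0.
  by rewrite mulr_ge0 // powR_ge0.
apply: (@sum_bound R beta x0 q s (fun k => F (s / cm k.+1)) K) => //.
by rewrite q0 q1.
Qed.

End main.

Theorem lemma3p4 (d : measure_display) (T : measurableType d) (R : realType)
  (P : probability T R) (tau : nat -> T -> R) (beta : R) :
  0 < beta < 1 ->
  (forall i, measurable_fun setT (tau i)) ->
  mutually_independent P tau ->
  identically_distributed P tau ->
  (forall i, P [set w | tau i w < 0] = 0%E) ->
  (0 < P [set w | tau 0%N w != 0%R])%E ->
  strictly_stable P beta tau ->
  exists M : R, forall t : R, 0 <= t -> forall n : nat, (1 <= n)%N ->
    ((n%:R `^ beta)^-1%:E * \int[P]_w renewal_count tau (n%:R * t) w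
      <= (t `^ beta * M)%:E)%E.
Proof.
move=> /andP [hb _] mtau ind idd neg0 pos stab.
have [C [C0 hC]] := @EN_bound d T R P tau beta mtau ind idd neg0 pos hb stab.
exists C => t t0 n n1.
have n0 : 0 < n%:R :> R by rewrite ltr0n.
have nb : 0 < n%:R `^ beta by exact: powR_gt0.
have hI := hC _ (mulr_ge0 (ltW n0) t0).
have hI0 : (0 <= \int[P]_w renewal_count tau (n%:R * t) w)%E.
  apply: integral_ge0 => w _; apply: ereal_sup_ubound; exists 0%N => //=.
  by rewrite /partial_sum big_ord0 mulr_ge0 // ltW.
have hx : (0 <= ((n%:R `^ beta)^-1)%:E)%E by rewrite lee_fin invr_ge0 ltW.
have := lee_pmul hx hI0 (lexx _) hI.
move=> h; apply: le_trans h _.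
rewrite -EFinM lee_fin powRM; [|exact: ltW|exact: t0].
have nb0 : n%:R `^ beta != 0 by rewrite gt_eqF.
rewrite [leLHS](_ : _ = t `^ beta * C) //.
by field.
Qed.
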